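(* Let $0<\mu<L_{\max}^{-1}$ with $L_{\max}=\max_i\|A_i\|_2^2$, let $\{x^n\}$ be generated by GAITA (as in the context) from an arbitrary $x^0\in\mathbf{R}^N$, and let $x^*$ be any limit point of $\{x^n\}$. Then there exists a positive integer $n^*>N$ such that for all $n>n^*$: (a) for every $j=1,\dots,N$, either $x_j^n=0$ or $|x_j^n|\geq\eta_{\mu,q}$; (b) $Supp(x^n)=Supp(x^* )$; (c) $sgn(x^n)=sgn(x^* )$ (componentwise).
   Context: Let $A\in\mathbf{R}^{m\times N}$ have columns $A_1,\dots,A_N$, $y\in\mathbf{R}^m$, $\lambda>0$, $q\in(0,1)$, and $T_\lambda(x)=\frac12\|Ax-y\|_2^2+\lambda\sum_{i=1}^N|x_i|^q$. For a step size $\mu>0$ set $\tau_{\mu,q}=\frac{2-q}{2-2q}(2\lambda\mu(1-q))^{\frac{1}{2-q}}$ and $\eta_{\mu,q}=(2\lambda\mu(1-q))^{\frac{1}{2-q}}$. For $z\in\mathbf{R}$ let $prox_{\mu,\lambda|\cdot|^q}(z)=\arg\min_{v\in\mathbf{R}}\{\frac{(z-v)^2}{2\mu}+\lambda|v|^q\}$ (a single point when $|z|\neq\tau_{\mu,q}$). Define $\mathcal{T}(z,w)$ as the unique element of $prox_{\mu,\lambda|\cdot|^q}(z)$ if $|z|\neq\tau_{\mu,q}$, and, if $|z|=\tau_{\mu,q}$, as $sgn(z)\eta_{\mu,q}$ when $w\neq0$ and $0$ when $w=0$. GAITA: given $x^0\in\mathbf{R}^N$, for $n=0,1,2,\dots$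 let $i=(n\bmod N)+1$, $z_i^n=x_i^n-\mu A_i^T(Ax^n-y)$, $x_i^{n+1}=\mathcal{T}(z_i^n,x_i^n)$, $x_j^{n+1}=x_j^n$ for $j\neq i$. $Supp(x)=\{i:x_i\neq0\}$, $sgn(0)=0$. *)

(* Defs.v *)
From HB Require Import structures.
From mathcomp Require Import all_boot all_order all_algebra.
From mathcomp Require Import all_classical all_reals all_analysis.
Set Implicit Arguments. Unset Strict Implicit. Unset Printing Implicit Defensive.
Import Order.TTheory GRing.Theory Num.Theory.
Local Open Scope ring_scope.

Section GAITA.
Variable R : realType.

Definition penq (lam q v : R) : R := lam * (`|v| `^ q).

Definition prox_obj (mu lam q z v : R) : R := (z - v) ^+ 2 / (2 * mu) + penq lam q v.

Definition in_prox (mu lam q z v : R) : Prop :=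
  forall w : R, prox_obj mu lam q z v <= prox_obj mu lam q z w.

Definition eta_mq (mu lam q : R) : R := (2 * lam * mu * (1 - q)) `^ (1 / (2 - q)).
Definition tau_mq (mu lam q : R) : R := (2 - q) / (2 - 2 * q) * eta_mq mu lam q.

Definition is_T (mu lam q z w v : R) : Prop :=
  if `|z| != tau_mq mu lam q then in_prox mu lam q z v
  else v = (if w != 0 then Num.sg z * eta_mq mu lam q else 0).

Definition colnorm2 (m N : nat) (A : 'M[R]_(m, N)) (i : 'I_N) : R :=
  \sum_(k < m) A k i ^+ 2.

Definition Lmax (m N : nat) (A : 'M[R]_(m, N)) : R :=
  \big[Num.max/0]_(i < N) colnorm2 A i.

(* the sequence x : nat -> 'cV_N is generated by GAITA (indices are 0-based:
   at step n the coordinate updated is n mod N) *)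
Definition GAITA_seq (m N : nat) (A : 'M[R]_(m, N)) (y : 'cV[R]_m)
    (lam q mu : R) (x : nat -> 'cV[R]_N) : Prop :=
  forall (n : nat) (j : 'I_N),
    if val j == (n %% N)%N then
      is_T mu lam q (x n j 0 - mu * ((A^T *m (A *m x n - y)) j 0)) (x n j 0)
           (x n.+1 j 0)
    else x n.+1 j 0 = x n j 0.

Definition gaita_limit_point (N : nat) (x : nat -> 'cV[R]_N) (xs : 'cV[R]_N) : Prop :=
  forall (eps : R), 0 < eps -> forall M : nat,
    exists n : nat, (M <= n)%N /\ forall j : 'I_N, `|x n j 0 - xs j 0| < eps.

Definition Supp (N : nat) (v : 'cV[R]_N) : {set 'I_N} := [set j | v j 0 != 0].

End GAITA.

(* Main.v *)
Require Import Defs.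
From HB Require Import structures.
From mathcomp Require Import all_boot all_order all_algebra.
From mathcomp Require Import all_classical all_reals all_analysis.
From mathcomp Require Import lra ring.
Import Order.TTheory GRing.Theory Num.Theory.
Local Open Scope ring_scope.

Lemma bern {R : realType} (s r : R) : 0 <= s -> 0 < r -> r < 1 ->
  s `^ r <= r * s + (1 - r).
Proof.
move=> s0 r0 r1.
have := @conjugate_powR R (s `^ r) 1 r^-1 (1 - r)^-1 (powR_ge0 _ _) ler01.
rewrite !invr_gt0 r0 subr_gt0 r1 !invrK => /(_ isT isT).
rewrite addrC subrK => /(_ erefl).
by rewrite mulr1 -powRrM mulfV ?gt_eqF // powRr1 // powR1 mul1r mulrC.
Qed.

Lemma mul2mu {R : realType} {mu X Y Z W : R} : 0 < mu ->
  X / (2 * mu) + Y <= Z / (2 * mu) + W -> X + 2 * mu * Y <= Z + 2 * mu * W.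
Proof.
move=> mu0 H.
have m0 : 0 < 2 * mu by lra.
move: m0 H; set k := 2 * mu => m0 H.
rewrite -(ler_pM2r m0) !mulrDl !divfK ?gt_eqF // in H.
nra.
Qed.

Lemma prox_lb {R : realType} (mu lam q z v : R) :
  0 < lam -> 0 < q -> q < 1 -> 0 < mu ->
  in_prox mu lam q z v -> v != 0 -> eta_mq mu lam q <= `|v|.
Proof.
move=> l0 q0 q1 m0 Hp v0.
set P := `|v| `^ q.
have P0 : 0 < P by rewrite powR_gt0 // normr_gt0.
set a := 2 * mu * lam.
have a0 : 0 < a by rewrite /a; apply: mulr_gt0 => //; lra.
have h0 : v ^+ 2 + a * P <= 2 * z * v.
  have := mul2mu m0 (Hp 0); rewrite /penq normr0 powR0 ?gt_eqF // mulr0 subr0.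
  rewrite -/P /a => H. 
  have E : (z - v) ^+ 2 = z ^+ 2 - 2 * z * v + v ^+ 2 by ring.
  rewrite E in H.
  lra.
have key : forall e, 0 < e -> a * (1 - q) * P <= (1 + e) * v ^+ 2.
  move=> e e0.
  have := mul2mu m0 (Hp ((1 + e) * v)); rewrite /penq -/P.
  rewrite normrM (gtr0_norm (_ : 0 < 1 + e)); last by lra.
  rewrite powRM ?normr_ge0 //; last by lra.
  set u := (1 + e) `^ q => H.
  have hu : u <= q * (1 + e) + (1 - q) by apply: bern => //; lra.
  have h1 : 0 <= - 2 * e * z * v + (2 * e + e ^+ 2) * v ^+ 2 + a * (u - 1) * P.
    have -> : - 2 * e * z * v + (2 * e + e ^+ 2) * v ^+ 2 =
       (z - (1 + e) * v) ^+ 2 - (z - v) ^+ 2 by ring.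
    have -> : a * (u - 1) * P = 2 * mu * (lam * (u * P)) - 2 * mu * (lam * P).
      by rewrite /a; ring.
    rewrite -/P in H; lra.
  have h2 : a * (u - 1) * P <= a * q * e * P.
    have aP : 0 < a * P by apply: mulr_gt0.
    have -> : a * (u - 1) * P = (a * P) * (u - 1) by ring.
    have -> : a * q * e * P = (a * P) * (q * e) by ring.
    rewrite ler_pM2l //; lra.
  have h3 : 0 <= e * (- 2 * z * v + (2 + e) * v ^+ 2 + a * q * P).
    have -> : e * (- 2 * z * v + (2 + e) * v ^+ 2 + a * q * P) =
      - 2 * e * z * v + (2 * e + e ^+ 2) * v ^+ 2 + a * q * e * P by ring.
    lra.
  rewrite pmulr_rge0 // in h3.
  have -> : a * (1 - q) * P = a * P - a * q * P by ring.
  lra.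
have v2 : 0 < v ^+ 2 by rewrite lt_def sqrf_eq0 v0 sqr_ge0.
have kc : a * (1 - q) * P <= v ^+ 2.
  rewrite leNgt; apply/negP => H.
  have := key ((a * (1 - q) * P - v ^+ 2) / (2 * v ^+ 2)).
  rewrite divr_gt0 ?subr_gt0 //; last by lra.
  move=> /(_ isT).
  have -> : (1 + (a * (1 - q) * P - v ^+ 2) / (2 * v ^+ 2)) * v ^+ 2 = v ^+ 2 + (a * (1 - q) * P - v ^+ 2) / 2.
    by field; exact: v0.
  lra.
have hv2 : `|v| `^ (2 - q) * P = v ^+ 2.
  rewrite /P -powRD; last by rewrite normr_eq0 v0 implybT.
  by rewrite subrK powR_mulrn ?normr_ge0 // real_normK // num_real.
have hc : 2 * lam * mu * (1 - q) <= `|v| `^ (2 - q).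
  rewrite -(ler_pM2r P0) hv2.
  have -> : 2 * lam * mu * (1 - q) * P = a * (1 - q) * P by rewrite /a; ring.
  exact: kc.
rewrite /eta_mq.
have -> : `|v| = (`|v| `^ (2 - q)) `^ (1 / (2 - q)).
  by rewrite -powRrM mul1r mulfV ?powRr1 ?normr_ge0 //; lra.
apply: ge0_ler_powR => //.
- rewrite divr_ge0 //; lra.
- rewrite nnegrE; apply: mulr_ge0; [apply: mulr_ge0; [apply: mulr_ge0|]|]; lra.
- by rewrite nnegrE powR_ge0.
Qed.

Lemma div2mu {R : realType} {mu X Y Z W : R} : 0 < mu ->
  X + 2 * mu * Y <= Z + 2 * mu * W -> X / (2 * mu) + Y <= Z / (2 * mu) + W.
Proof.
move=> mu0 H.
have m0 : 0 < 2 * mu by lra.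
move: m0 H; set k := 2 * mu => m0 H.
rewrite -(ler_pM2r m0) !mulrDl !divfK ?gt_eqF //.
nra.
Qed.

Lemma c_gt0 {R : realType} {mu lam q : R} (l0 : 0 < lam) (q0 : 0 < q) (q1 : q < 1) (m0 : 0 < mu) : 0 < 2 * lam * mu * (1 - q).
Proof. have h1 : 0 < 2 * lam by lra. have h2 : 0 < 2 * lam * mu by apply: mulr_gt0. apply: mulr_gt0 => //; lra. Qed.

Lemma eta_gt0 {R : realType} {mu lam q : R} (l0 : 0 < lam) (q0 : 0 < q) (q1 : q < 1) (m0 : 0 < mu) : 0 < eta_mq mu lam q.
Proof. by rewrite /eta_mq powR_gt0 // (c_gt0 l0 q0 q1 m0). Qed.

Lemma etaE {R : realType} {mu lam q : R} (l0 : 0 < lam) (q0 : 0 < q) (q1 : q < 1) (m0 : 0 < mu) : eta_mq mu lam q `^ (2 - q) = 2 * lam * mu * (1 - q).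
Proof.
rewrite /eta_mq -powRrM mul1r mulVf ?powRr1 //; first exact: ltW (c_gt0 l0 q0 q1 m0).
by rewrite gt_eqF //; lra.
Qed.

Lemma powRadd {R : realType} (x a b : R) : 0 < x -> x `^ a * x `^ b = x `^ (a + b).
Proof. by move=> x0; rewrite powRD // (gt_eqF x0) implybT. Qed.

Lemma thr_ineq {R : realType} {mu lam q : R} (l0 : 0 < lam) (q0 : 0 < q) (q1 : q < 1) (m0 : 0 < mu) (w : R) :
  tau_mq mu lam q ^+ 2 <= (tau_mq mu lam q - w) ^+ 2 + 2 * mu * lam * `|w| `^ q.
Proof.
set e := eta_mq mu lam q.
have cc := c_gt0 l0 q0 q1 m0.
set c := 2 * lam * mu * (1 - q) in cc *.
have e0 : 0 < e := (eta_gt0 l0 q0 q1 m0).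
have P0 : 0 <= `|w| `^ q := powR_ge0 _ _.
have a0 : 0 < 2 * mu * lam by apply: mulr_gt0 => //; lra.
have t0 : 0 < tau_mq mu lam q.
  rewrite /tau_mq mulr_gt0 // divr_gt0 //; lra.
case: (lerP w 0) => w0.
  have : 0 <= 2 * mu * lam * `|w| `^ q by apply: mulr_ge0 => //; lra.
  nra.
set t := w / e.
have tt : 0 < t by rewrite divr_gt0.
have hw : w = e * t by rewrite /t mulrC divfK // gt_eqF.
set eq := e `^ q; set tq := t `^ q; set T1 := t `^ (1 - q); set T2 := t `^ (2 - q).
have eq0 : 0 < eq by rewrite powR_gt0.
have tq0 : 0 < tq by rewrite powR_gt0.
have he2 : e ^+ 2 = c * eq.
  by rewrite /c -(etaE l0 q0 q1 m0) /eq powRadd // subrK -powR_mulrn // ltW.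
have ht2 : t ^+ 2 = T2 * tq.
  by rewrite /T2 /tq powRadd // subrK -powR_mulrn // ltW.
have ht1 : t = T1 * tq.
  by rewrite /T1 /tq powRadd // subrK powRr1 // ltW.
have hW : `|w| `^ q = eq * tq.
  by rewrite gtr0_norm // hw powRM // ltW.
have hb : (2 - q) * T1 <= (1 - q) * T2 + 1.
  have q2 : 0 < 2 - q by lra.
  have r0 : 0 < (1 - q) / (2 - q) by apply: divr_gt0; lra.
  have r1 : (1 - q) / (2 - q) < 1 by rewrite ltr_pdivrMr //; lra.
  have H := @bern _ (t `^ (2 - q)) _ (powR_ge0 t (2 - q)) r0 r1.
  rewrite -powRrM mulrC divfK ?gt_eqF // -/T1 -/T2 in H.
  have -> : (1 - q) * T2 + 1 = (2 - q) * ((1 - q) / (2 - q) * T2 + (1 - (1 - q) / (2 - q))).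
    by field; rewrite gt_eqF.
  by rewrite ler_pM2l.
have E : (tau_mq mu lam q - w) ^+ 2 + 2 * mu * lam * `|w| `^ q - tau_mq mu lam q ^+ 2
   = c * eq * tq / (1 - q) * ((1 - q) * T2 + 1 - (2 - q) * T1).
  have -> : (tau_mq mu lam q - w) ^+ 2 + 2 * mu * lam * `|w| `^ q - tau_mq mu lam q ^+ 2
     = w ^+ 2 - 2 * tau_mq mu lam q * w + 2 * mu * lam * `|w| `^ q by ring.
  rewrite hW /tau_mq -/e hw exprMn he2 ht2.
  have -> : 2 * ((2 - q) / (2 - 2 * q) * e) * (e * t) = 2 * ((2 - q) / (2 - 2 * q)) * e ^+ 2 * t by ring.
  rewrite he2 ht1 /c.
  by field; lra.
have : 0 <= c * eq * tq / (1 - q) * ((1 - q) * T2 + 1 - (2 - q) * T1).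
  apply: mulr_ge0; last by rewrite subr_ge0.
  apply: divr_ge0; last by lra.
  apply: mulr_ge0; last exact: ltW.
  apply: mulr_ge0; [exact: ltW cc | exact: ltW].
rewrite -E; lra.
Qed.



Lemma eta_eq {R : realType} {mu lam q : R} (l0 : 0 < lam) (q0 : 0 < q) (q1 : q < 1) (m0 : 0 < mu) :
  (tau_mq mu lam q - eta_mq mu lam q) ^+ 2 + 2 * mu * lam * `|eta_mq mu lam q| `^ q
  = tau_mq mu lam q ^+ 2.
Proof.
have e0 := eta_gt0 l0 q0 q1 m0.
set e := eta_mq mu lam q in e0 *.
have he2 : e ^+ 2 = 2 * lam * mu * (1 - q) * e `^ q.
  by rewrite -(etaE l0 q0 q1 m0) powRadd // subrK -powR_mulrn // ltW.
rewrite gtr0_norm // /tau_mq -/e.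
apply/eqP; rewrite -subr_eq0; apply/eqP.
have -> : ((2 - q) / (2 - 2 * q) * e - e) ^+ 2 + 2 * mu * lam * e `^ q - ((2 - q) / (2 - 2 * q) * e) ^+ 2
   = (1 - 2 * ((2 - q) / (2 - 2 * q))) * e ^+ 2 + 2 * mu * lam * e `^ q by ring.
rewrite he2; field; lra.
Qed.

Lemma thr_prox {R : realType} {mu lam q z : R} (l0 : 0 < lam) (q0 : 0 < q) (q1 : q < 1) (m0 : 0 < mu) :
  `|z| = tau_mq mu lam q ->
  in_prox mu lam q z 0 /\ in_prox mu lam q z (Num.sg z * eta_mq mu lam q).
Proof.
move=> hz.
have t0 : 0 < tau_mq mu lam q.
  rewrite /tau_mq mulr_gt0 ?(eta_gt0 l0 q0 q1 m0) // divr_gt0 //; lra.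
have key : forall w, tau_mq mu lam q ^+ 2 <= (z - w) ^+ 2 + 2 * mu * (lam * `|w| `^ q).
  move=> w.
  have [z0|z0] := lerP 0 z.
    move: hz; rewrite (ger0_norm z0) => ->.
    by rewrite mulrA; apply: thr_ineq.
  move: hz; rewrite (ltr0_norm z0) => hz.
  have -> : z = - tau_mq mu lam q by rewrite -hz opprK.
  have -> : (- tau_mq mu lam q - w) ^+ 2 = (tau_mq mu lam q - (- w)) ^+ 2 by ring.
  by rewrite -(normrN w) mulrA; apply: thr_ineq.
have hz2 : z ^+ 2 = tau_mq mu lam q ^+ 2 by rewrite -hz real_normK // num_real.
split=> w; apply: div2mu => //; rewrite /penq.
  by rewrite subr0 normr0 powR0 ?gt_eqF // mulr0 mulr0 addr0 hz2.
have -> : (z - Num.sg z * eta_mq mu lam q) ^+ 2 + 2 * mu * (lam * `|Num.sg z * eta_mq mu lam q| `^ q)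
   = tau_mq mu lam q ^+ 2.
  rewrite -(eta_eq l0 q0 q1 m0) normrM normr_sg.
  have zn : z != 0 by rewrite -normr_eq0 hz gt_eqF.
  rewrite zn mul1r mulrA.
  have [z0|z0] := lerP 0 z.
    move: hz; rewrite (ger0_norm z0) => ->.
    by rewrite gtr0_sg // mul1r.
  move: hz; rewrite (ltr0_norm z0) => hz.
  rewrite ltr0_sg // -hz; congr (_ + _); ring.
exact: key.
Qed.

Lemma isT_prox {R : realType} {mu lam q z w v : R} (l0 : 0 < lam) (q0 : 0 < q) (q1 : q < 1) (m0 : 0 < mu) :
  is_T mu lam q z w v -> in_prox mu lam q z v.
Proof.
rewrite /is_T; case: ifP => // /negbFE/eqP hz.
have [H0 He] := thr_prox l0 q0 q1 m0 hz.
by case: ifP => _ ->.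
Qed.

Lemma isT_valid {R : realType} {mu lam q z w v : R} (l0 : 0 < lam) (q0 : 0 < q) (q1 : q < 1) (m0 : 0 < mu) :
  is_T mu lam q z w v -> v = 0 \/ eta_mq mu lam q <= `|v|.
Proof.
move=> /(isT_prox l0 q0 q1 m0) H.
have [->|v0] := eqVneq v 0; first by left.
by right; apply: prox_lb H v0.
Qed.

Definition Tobj {R : realType} {m N : nat} (A : 'M[R]_(m, N)) (y : 'cV[R]_m) (lam q : R)
  (x : 'cV[R]_N) : R :=
  \sum_(k < m) ((A *m x - y) k 0) ^+ 2 + 2 * lam * \sum_(j < N) `|x j 0| `^ q.

Lemma Tobj_ge0 {R : realType} {m N : nat} (A : 'M[R]_(m, N)) y lam q x :
  0 <= lam -> 0 <= Tobj A y lam q x.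
Proof.
move=> l0; apply: addr_ge0; first by apply: sumr_ge0 => k _; apply: sqr_ge0.
apply: mulr_ge0; first by apply: mulr_ge0.
by apply: sumr_ge0 => j _; apply: powR_ge0.
Qed.

Lemma colnorm_le {R : realType} {m N : nat} (A : 'M[R]_(m, N)) i :
  colnorm2 A i <= Lmax A.
Proof. by rewrite /Lmax; apply: le_bigmax. Qed.

Lemma descent {R : realType} {m N : nat} (A : 'M[R]_(m, N)) (y : 'cV[R]_m)
  (lam q mu : R) (x x' : 'cV[R]_N) (i : 'I_N) :
  0 < mu ->
  (forall j, j != i -> x' j 0 = x j 0) ->
  in_prox mu lam q (x i 0 - mu * ((A^T *m (A *m x - y)) i 0)) (x' i 0) ->
  mu * Tobj A y lam q x' <= mu * Tobj A y lam q x - (1 - mu * Lmax A) * (x' i 0 - x i 0) ^+ 2.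
Proof.
move=> m0 hj hp.
set d := x' i 0 - x i 0.
set r := fun k => (A *m x - y) k 0.
have hr : forall k, (A *m x' - y) k 0 = r k + A k i * d.
  move=> k; rewrite /r !mxE (bigD1 i) //= [in X in _ = X - _ + _](bigD1 i) //=.
  have -> : \sum_(j < N | j != i) A k j * x' j 0 = \sum_(j < N | j != i) A k j * x j 0.
    by apply: eq_bigr => j /hj ->.
  rewrite /d; ring.
have hP : \sum_(j < N) `|x' j 0| `^ q = \sum_(j < N) `|x j 0| `^ q + `|x' i 0| `^ q - `|x i 0| `^ q.
  rewrite (bigD1 i) //= [in X in _ = X + _ - _](bigD1 i) //=.
  have -> : \sum_(j < N | j != i) `|x' j 0| `^ q = \sum_(j < N | j != i) `|x j 0| `^ q.
    by apply: eq_bigr => j /hj ->.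
  ring.
set g := (A^T *m (A *m x - y)) i 0.
have hg : g = \sum_(k < m) A k i * r k by rewrite /g mxE; apply: eq_bigr => k _; rewrite mxE.
have hS : \sum_(k < m) ((A *m x' - y) k 0) ^+ 2 =
    \sum_(k < m) (r k) ^+ 2 + 2 * d * g + d ^+ 2 * colnorm2 A i.
  rewrite hg /colnorm2 mulr_sumr mulr_sumr -!big_split /=.
  by apply: eq_bigr => k _; rewrite hr; ring.
have := mul2mu m0 (hp (x i 0)); rewrite /penq -/g.
have -> : x' i 0 = x i 0 + d by rewrite /d; ring.
set P' := `|x i 0 + d| `^ q; set P := `|x i 0| `^ q => H.
have Li := colnorm_le A i.
have hL : mu * d ^+ 2 * colnorm2 A i <= mu * d ^+ 2 * Lmax A.
  apply: ler_wpM2l => //; apply: mulr_ge0; [exact: ltW | exact: sqr_ge0].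
rewrite /Tobj hS hP -/P.
have -> : `|x' i 0| `^ q = P' by rewrite /P' /d addrC subrK.
have -> : \sum_(k < m) (A *m x - y) k 0 ^+ 2 = \sum_(k < m) r k ^+ 2 by [].
lra.
Qed.

Lemma sg_close {R : realType} {e a b : R} : 0 < e -> e <= `|a| -> `|b - a| < e ->
  Num.sg b = Num.sg a.
Proof.
move=> e0 ha hb.
case: (ltgtP a 0) => a0.
- rewrite (ltr0_norm a0) in ha.
  have b0 : b < 0.
    have : b - a < e by apply: le_lt_trans hb; apply: ler_norm.
    lra.
  by rewrite ltr0_sg // ltr0_sg.
- rewrite (gtr0_norm a0) in ha.
  have b0 : 0 < b.
    have : a - b < e by apply: le_lt_trans hb; rewrite -normrN opprB; apply: ler_norm.
    lra.
  by rewrite gtr0_sg // gtr0_sg.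
- by move: ha; rewrite a0 normr0; lra.
Qed.

Lemma sg_valid {R : realType} (e a b : R) : 0 < e ->
  (a = 0 \/ e <= `|a|) -> (b = 0 \/ e <= `|b|) -> `|b - a| < e ->
  Num.sg b = Num.sg a.
Proof.
move=> e0 [->|ha] hb' hb; last exact: sg_close hb.
case: hb' => [->//|hb'].
by symmetry; apply: (sg_close e0 hb'); rewrite sub0r normrN; rewrite subr0 in hb.
Qed.

Lemma ev_small {R : realType} (F : nat -> R) (big : nat -> Prop) (c : R) :
  0 < c -> (forall n, 0 <= F n) -> (forall n, F n.+1 <= F n) ->
  (forall n, big n -> F n.+1 <= F n - c) ->
  exists n0, forall n, (n0 <= n)%N -> ~ big n.
Proof.
move=> c0 F0 Fmon Fbig.
case: (pselect (exists n0, forall n, (n0 <= n)%N -> ~ big n)) => // H.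
exfalso.
have H' : forall n0, exists n, (n0 <= n)%N /\ big n.
  move=> n0; case: (pselect (exists n, (n0 <= n)%N /\ big n)) => // H2.
  exfalso; apply: H; exists n0 => n hn hb; apply: H2; by exists n.
have mono : forall n k, F (n + k)%N <= F n.
  move=> n; elim=> [|k IH]; first by rewrite addn0.
  by rewrite addnS; apply: le_trans (Fmon _) IH.
have cl : forall k : nat, exists n, F n <= F 0%N - k%:R * c.
  elim=> [|k [n hn]]; first by exists 0%N; rewrite mul0r subr0.
  have [n' [hn' hb]] := H' n.
  exists n'.+1.
  have := Fbig _ hb.
  have := mono n (n' - n)%N; rewrite subnKC // => hm.
  rewrite -natr1 mulrDl mul1r.
  lra.
have [n hn] := cl (Num.truncn (F 0%N / c)).+1.
have := truncnS_gt (F 0%N / c).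
rewrite ltr_pdivrMr // => h.
have := F0 n.
lra.
Qed.

Theorem theorem3 (R : realType) (m N : nat) (A : 'M[R]_(m, N)) (y : 'cV[R]_m)
    (lam q mu : R) (x : nat -> 'cV[R]_N) (xs : 'cV[R]_N) :
  0 < lam -> 0 < q -> q < 1 ->
  0 < mu -> mu * Lmax A < 1 ->
  GAITA_seq A y lam q mu x ->
  gaita_limit_point x xs ->
  exists nstar : nat, (N < nstar)%N /\
    forall n : nat, (nstar < n)%N ->
      (forall j : 'I_N, x n j 0 = 0 \/ eta_mq mu lam q <= `|x n j 0|) /\
      Supp (x n) = Supp xs /\
      (forall j : 'I_N, Num.sg (x n j 0) = Num.sg (xs j 0)).
Proof.
move=> l0 q0 q1 m0 hL hG hlim.
case: (posnP N) => [N0|Npos].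
  exists 1%N; split; first by rewrite N0.
  move=> n _; split; last split.
  - by move=> -[j hj]; exfalso; move: hj; rewrite N0.
  - by apply/setP => -[j hj]; exfalso; move: hj; rewrite N0.
  - by move=> -[j hj]; exfalso; move: hj; rewrite N0.
have e0 := eta_gt0 l0 q0 q1 m0.
set e := eta_mq mu lam q in e0 *.
have valid : forall n (j : 'I_N), (val j < n)%N -> x n j 0 = 0 \/ e <= `|x n j 0|.
  elim=> [//|n IH] j hj.
  have := hG n j; case: ifP => [_ /(isT_valid l0 q0 q1 m0)//|hn ->].
  apply: IH; rewrite ltn_neqAle -ltnS hj andbT.
  apply/eqP => hjn; move: hn; rewrite hjn modn_small ?eqxx //.
  by rewrite -hjn ltn_ord.
set c := 1 - mu * Lmax A.
have c0 : 0 < c by rewrite /c subr_gt0.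
set F := fun n => mu * Tobj A y lam q (x n).
have stepj : forall n (j : 'I_N), F n.+1 <= F n - c * (x n.+1 j 0 - x n j 0) ^+ 2.
  move=> n j.
  have upd : forall i : 'I_N, val i == (n %% N)%N ->
      F n.+1 <= F n - c * (x n.+1 i 0 - x n i 0) ^+ 2.
    move=> i hi; apply: descent => //.
      move=> j' hj'; have := hG n j'; case: ifP => // hj2 _.
      by move: hj'; rewrite -(inj_eq val_inj) (eqP hj2) (eqP hi) eqxx.
    by have := hG n i; rewrite hi => /(isT_prox l0 q0 q1 m0).
  have := hG n j; case: ifP => [hj _|_ ->]; first exact: upd.
  rewrite subrr expr0n /= mulr0 subr0.
  have := upd (Ordinal (ltn_pmod n Npos)) (eqxx _).
  have : 0 <= c * (x n.+1 (Ordinal (ltn_pmod n Npos)) 0 - x n (Ordinal (ltn_pmod n Npos)) 0) ^+ 2.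
    by apply: mulr_ge0; [exact: ltW | exact: sqr_ge0].
  lra.
have Fmon : forall n, F n.+1 <= F n.
  move=> n; have := stepj n (Ordinal Npos).
  have : 0 <= c * (x n.+1 (Ordinal Npos) 0 - x n (Ordinal Npos) 0) ^+ 2.
    by apply: mulr_ge0; [exact: ltW | exact: sqr_ge0].
  lra.
have F0 : forall n, 0 <= F n.
  by move=> n; apply: mulr_ge0; [exact: ltW | apply: Tobj_ge0; exact: ltW].
have ce0 : 0 < c * e ^+ 2 by apply: mulr_gt0 => //; apply: exprn_gt0.
have Fbig : forall n, (exists j : 'I_N, e <= `|x n.+1 j 0 - x n j 0|) -> F n.+1 <= F n - c * e ^+ 2.
  move=> n [j hj].
  have := stepj n j.
  have : e ^+ 2 <= (x n.+1 j 0 - x n j 0) ^+ 2.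
    have h : e ^+ 2 <= `|x n.+1 j 0 - x n j 0| ^+ 2 by nra.
    by rewrite real_normK ?num_real in h.
  move=> h1 h2.
  have : c * e ^+ 2 <= c * (x n.+1 j 0 - x n j 0) ^+ 2 by rewrite ler_pM2l.
  lra.
have [n0 hn0] := @ev_small R F (fun n => exists j : 'I_N, e <= `|x n.+1 j 0 - x n j 0|)
   (c * e ^+ 2) ce0 F0 Fmon Fbig.
set n1 := maxn n0 N.
have small : forall n, (n1 <= n)%N -> forall j : 'I_N, `|x n.+1 j 0 - x n j 0| < e.
  move=> n hn j; rewrite ltNge; apply/negP => h.
  by apply: (hn0 n); [apply: leq_trans (leq_maxl _ _) hn | exists j].
have hN1 : (N <= n1)%N by apply: leq_maxr.
have sgstep : forall n, (n1 <= n)%N -> forall j : 'I_N,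
    Num.sg (x n.+1 j 0) = Num.sg (x n j 0).
  move=> n hn j; apply: (sg_valid _ _ _ e0 _ _ (small n hn j)); apply: valid.
    exact: leq_trans (ltn_ord j) (leq_trans hN1 hn).
  exact: ltnW (leq_trans (ltn_ord j) (leq_trans hN1 hn)).
have sgconst : forall k (j : 'I_N), Num.sg (x (n1 + k)%N j 0) = Num.sg (x n1 j 0).
  move=> k j; elim: k => [|k IH]; first by rewrite addn0.
  by rewrite addnS sgstep ?leq_addr.
have sgn : forall n (j : 'I_N), (n1 <= n)%N -> Num.sg (x n j 0) = Num.sg (x n1 j 0).
  by move=> n j hn; rewrite -(subnKC hn) sgconst.
have lim : forall j : 'I_N, Num.sg (xs j 0) = Num.sg (x n1 j 0).
  move=> j.
  have [hz|hnz] := eqVneq (x n1 j 0) 0.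
    rewrite hz sgr0.
    have zall : forall n, (n1 <= n)%N -> x n j 0 = 0.
      by move=> n hn; apply/eqP; rewrite -sgr_eq0 (sgn n j hn) hz sgr0.
    have [->|xz] := eqVneq (xs j 0) 0; first by rewrite sgr0.
    exfalso.
    have hx : 0 < `|xs j 0| by rewrite normr_gt0.
    have [n [hn hj]] := hlim `|xs j 0| hx n1.
    by move: (hj j); rewrite zall // sub0r normrN ltxx.
  have [n [hn hj]] := hlim e e0 n1.
  have xn : x n j 0 != 0 by rewrite -sgr_eq0 (sgn n j hn) sgr_eq0.
  have ve : e <= `|x n j 0|.
    case: (valid n j (leq_trans (ltn_ord j) (leq_trans hN1 hn))) => [h|//].
    by rewrite h eqxx in xn.
  rewrite -(sgn n j hn); apply: (sg_close e0 ve).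
  by rewrite -normrN opprB; exact: hj.
exists n1.+1; split; first by rewrite ltnS.
move=> n hn.
have hn1 : (n1 <= n)%N by apply: leq_trans (leqnSn n1) (ltnW hn).
have hN : (N <= n)%N by apply: leq_trans hN1 hn1.
split; [|split].
- by move=> j; apply: valid; apply: leq_trans (ltn_ord j) hN.
- by apply/setP => j; rewrite !inE -(sgr_eq0 (x n j 0)) -(sgr_eq0 (xs j 0)) (sgn n j hn1) lim.
- by move=> j; rewrite (sgn n j hn1) lim.
Qed.
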